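(* Let $\ell_1,\ell_2,\ell_3\ge1$. Let $\mathcal A_{\ell_1,\ell_2,\ell_3}\subset\mathbb R^{\ell_1+\ell_2+\ell_3}$ (coordinates $x_1,\dots,x_{\ell_1},y_1,\dots,y_{\ell_2},z_1,\dots,z_{\ell_3}$) be the arrangement of hyperplanes $x_i+y_j+z_k=0$ (all $i,j,k$), $x_{i_1}=x_{i_2}$ ($i_1<i_2$), $y_{j_1}=y_{j_2}$ ($j_1<j_2$), $z_{k_1}=z_{k_2}$ ($k_1<k_2$). Let $\mathcal H\subset\mathbb R^{\ell_1+\ell_2+\ell_3-2}$ (coordinates $x'_1,\dots,x'_{\ell_1-1},y'_1,\dots,y'_{\ell_2-1},z'_1,\dots,z'_{\ell_3}$) be the arrangement of hyperplanes $x'_i=0$, $y'_j=0$, $z'_k=0$, $x'_i+z'_k=0$, $y'_j+z'_k=0$, $x'_i+y'_j+z'_k=0$, $x'_{i_1}=x'_{i_2}$ ($i_1<i_2$), $y'_{j_1}=y'_{j_2}$ ($j_1<j_2$), $z'_{k_1}=z'_{k_2}$ ($k_1<k_2$), for all indices $1\le i\le\ell_1-1$, $1\le j\le\ell_2-1$, $1\le k\le\ell_3$. Then $\chi_{\mathcal A_{\ell_1,\ell_2,\ell_3}}(t)=t^2\chi_{\mathcal H}(t)$; in particular both arrangements have the same number of chambers.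
   Context: For a hyperplane arrangement $\mathcal H$ in $\mathbb R^m$, $L(\mathcal H)$ is the poset of nonempty intersections of hyperplanes (including $\mathbb R^m$), ordered by reverse inclusion, with Möbius function $\mu(\mathbb R^m)=1$, $\mu(x)=-\sum_{y<x}\mu(y)$; the characteristic polynomial is $\chi_{\mathcal H}(t)=\sum_{x\in L(\mathcal H)}\mu(x)t^{\dim x}$. (The arrangement $\mathcal H$ is the arrangement $\mathcal H_A$ attached to $\overline{\mathcal O^{\min}}(\{\ell_1,\ell_2,\ell_3\})$.) *)

(* Defs.v *)
From HB Require Import structures.
From mathcomp Require Import all_boot all_order all_algebra.
From Stdlib Require Import ClassicalEpsilon.
Set Implicit Arguments. Unset Strict Implicit. Unset Printing Implicit Defensive.
Import Order.TTheory GRing.Theory Num.Theory.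
Local Open Scope ring_scope.

(* A central hyperplane arrangement in R^m is given by a list of normal
   vectors a : 'rV_m ; the hyperplane is {x | x . a = 0}. *)

Section Lattice.
Variables (R : fieldType) (m : nat).

(* the intersection of the hyperplanes indexed by T, as a canonical
   (genmx) row space; T = set0 gives the whole space R^m *)
Definition flat (A : seq 'rV[R]_m) (T : {set 'I_(size A)}) : 'M[R]_m :=
  (<< kermx (\matrix_(i < m, j < size A)
               (if j \in T then (A`_j) 0 i else 0)) >>)%MS.

Definition intersection_poset (A : seq 'rV[R]_m) : seq 'M[R]_m :=
  undup [seq flat T | T <- enum [set: {set 'I_(size A)}]].

(* Moebius function from the bottom R^m, ordered by reverse inclusion:
   mu(R^m) = 1, mu(x) = - sum_{y < x} mu(y), where y < x means that the
   subspace y strictly contains x.  The recursion is computed with fuel;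
   fuel m.+1 suffices since every strict chain has length <= m. *)
Fixpoint mobius_rec (L : seq 'M[R]_m) (fuel : nat) (x : 'M[R]_m) : int :=
  match fuel with
  | 0 => 0
  | f.+1 => if (1%:M <= x)%MS then 1
            else - \sum_(y <- L | (x < y)%MS) mobius_rec L f y
  end.

Definition mobius (A : seq 'rV[R]_m) (x : 'M[R]_m) : int :=
  mobius_rec (intersection_poset A) m.+1 x.

Definition char_poly_arr (A : seq 'rV[R]_m) : {poly int} :=
  \sum_(x <- intersection_poset A) (mobius A x)%:P * 'X^(\rank x).

End Lattice.

Definition decP (P : Prop) : bool :=
  if excluded_middle_informative P then true else false.

Section Chambers.
Variables (R : realFieldType) (m : nat).

Definition chamber_sign (A : seq 'rV[R]_m) (s : {ffun 'I_(size A) -> bool}) : Prop :=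
  exists x : 'rV[R]_m, forall i : 'I_(size A),
    ((x *m (A`_i)^T) 0 0 != 0) /\ ((0 < (x *m (A`_i)^T) 0 0) = s i).

Definition nchambers (A : seq 'rV[R]_m) : nat :=
  #|[set s : {ffun 'I_(size A) -> bool} | decP (chamber_sign s)]|.

End Chambers.

Section Coords.
Variables (R : pzRingType) (a b c : nat).
(* coordinates of R^(a+b+c): x_1..x_a, y_1..y_b, z_1..z_c *)
Definition ex (i : 'I_a) : 'rV[R]_(a + b + c) := delta_mx 0 (lshift c (lshift b i)).
Definition ey (j : 'I_b) : 'rV[R]_(a + b + c) := delta_mx 0 (lshift c (rshift a j)).
Definition ez (k : 'I_c) : 'rV[R]_(a + b + c) := delta_mx 0 (rshift (a + b) k).

Definition diffs n (e : 'I_n -> 'rV[R]_(a + b + c)) : seq 'rV[R]_(a + b + c) :=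
  [seq e p.1 - e p.2
  | p <- [seq q <- [seq (i1, i2) | i1 <- enum 'I_n, i2 <- enum 'I_n]
         | (nat_of_ord q.1 < nat_of_ord q.2)%N]].
End Coords.

Definition arrA (R : pzRingType) (l1 l2 l3 : nat) : seq 'rV[R]_(l1 + l2 + l3) :=
  flatten [seq [seq @ex R l1 l2 l3 i + @ey R l1 l2 l3 j + @ez R l1 l2 l3 k
               | j <- enum 'I_l2, k <- enum 'I_l3] | i <- enum 'I_l1]
  ++ diffs (@ex R l1 l2 l3) ++ diffs (@ey R l1 l2 l3) ++ diffs (@ez R l1 l2 l3).

Definition arrH (R : pzRingType) (l1 l2 l3 : nat) : seq 'rV[R]_(l1.-1 + l2.-1 + l3) :=
  let X := @ex R l1.-1 l2.-1 l3 in let Y := @ey R l1.-1 l2.-1 l3 in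
  let Z := @ez R l1.-1 l2.-1 l3 in
  [seq X i | i <- enum 'I_l1.-1]
  ++ [seq Y j | j <- enum 'I_l2.-1]
  ++ [seq Z k | k <- enum 'I_l3]
  ++ [seq X i + Z k | i <- enum 'I_l1.-1, k <- enum 'I_l3]
  ++ [seq Y j + Z k | j <- enum 'I_l2.-1, k <- enum 'I_l3]
  ++ flatten [seq [seq X i + Y j + Z k | j <- enum 'I_l2.-1, k <- enum 'I_l3]
             | i <- enum 'I_l1.-1]
  ++ diffs X ++ diffs Y ++ diffs Z.

(* Main.v *)
Require Import Defs.
From HB Require Import structures.
From mathcomp Require Import all_boot all_order all_algebra.
From Stdlib Require Import ClassicalEpsilon.
From mathcomp Require Import zify.
Set Implicit Arguments. Unset Strict Implicit. Unset Printing Implicit Defensive.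
Import Order.TTheory GRing.Theory Num.Theory.
Local Open Scope ring_scope.

Lemma mob_fuel (F : fieldType) (k : nat) (L : seq 'M[F]_k) f x :
  (k < \rank x + f)%N -> mobius_rec L f.+1 x = mobius_rec L f x.
Proof.
elim: f x => [|f IH] x h.
  by have := rank_leq_col x; lia.
rewrite [LHS]/= [RHS]/=; case: ifP => // _; congr (- _).
apply: eq_bigr => y xy; apply: IH; have := rank_ltmx xy; lia.
Qed.

Lemma mob_fuel_add (F : fieldType) (k : nat) (L : seq 'M[F]_k) f d x :
  (k < \rank x + f)%N -> mobius_rec L (f + d) x = mobius_rec L f x.
Proof.
move=> h; elim: d => [|d IH]; first by rewrite addn0.
by rewrite addnS mob_fuel ?IH //; lia.
Qed.

Lemma decPP (Pr : Prop) : reflect Pr (Defs.decP Pr).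
Proof. by rewrite /Defs.decP; case: (excluded_middle_informative Pr) => h; constructor. Qed.

Section Transfer.
Variables (R : realFieldType) (m n : nat) (P : 'M[R]_(n, m)) (Q : 'M[R]_(m, n)).
Hypothesis PQ : P *m Q = 1%:M.

Definition pre (y : 'M[R]_n) : 'M[R]_m := (<< kermx (P^T *m cokermx y) >>)%MS.

Lemma QtPt : Q^T *m P^T = 1%:M.
Proof. by rewrite -trmx_mul PQ trmx1. Qed.

Lemma sub_pre k (u : 'M_(k, m)) y : (u <= pre y)%MS = (u *m P^T <= y)%MS.
Proof. by rewrite genmxE sub_kermx submxE mulmxA. Qed.

Lemma pre_le x y : (pre x <= pre y)%MS = (x <= y)%MS.
Proof.
apply/idP/idP => H.
  have: (x *m Q^T <= pre x)%MS by rewrite sub_pre -mulmxA QtPt mulmx1.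
  by move/submx_trans/(_ H); rewrite sub_pre -mulmxA QtPt mulmx1.
by rewrite sub_pre; apply: submx_trans H; rewrite -sub_pre.
Qed.

Lemma pre_lt x y : (pre x < pre y)%MS = (x < y)%MS.
Proof. by rewrite !ltmxE !pre_le. Qed.

Lemma pre_full y : (1%:M <= pre y)%MS = (1%:M <= y)%MS.
Proof.
rewrite sub_pre mul1mx; apply/idP/idP => H.
  by apply: submx_trans H; rewrite -QtPt submxMl.
exact: submx_trans (submx1 _) H.
Qed.

Lemma rank_pre y : \rank (pre y) = (\rank y + (m - n))%N.
Proof.
rewrite genmxE mxrank_ker.
have ->: \rank (P^T *m cokermx y) = \rank (cokermx y).
  apply/eqP; rewrite eqn_leq mxrankM_maxr /=.
  by rewrite -{1}[cokermx y]mul1mx -QtPt -mulmxA mxrankM_maxr.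
rewrite mxrank_coker.
have: (n <= m)%N.
  rewrite -{1}(mxrank1 R n) -QtPt.
  exact: leq_trans (mxrankM_maxr _ _) (rank_leq_row _).
have := rank_leq_col y; lia.
Qed.

Variables (A : seq 'rV[R]_m) (B : seq 'rV[R]_n).
Hypothesis hAB : forall v, (v \in A) = (v \in [seq b *m P | b <- B]).

Lemma ex_sigma : exists sigma : 'I_(size A) -> 'I_(size B),
  forall i : 'I_(size A), A`_i = B`_(sigma i) *m P.
Proof.
suff H : forall i : 'I_(size A), exists j : 'I_(size B), A`_i = B`_j *m P.
  by have [sigma hs] := fin_all_exists H; exists sigma.
move=> i.
have: A`_i \in A by rewrite mem_nth.
rewrite hAB => /mapP [b bB ->].
have hb : (index b B < size B)%N by rewrite index_mem.
by exists (Ordinal hb); rewrite /= nth_index.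
Qed.

Lemma ex_tau : exists tau : 'I_(size B) -> 'I_(size A),
  forall j : 'I_(size B), B`_j *m P = A`_(tau j).
Proof.
suff H : forall j : 'I_(size B), exists i : 'I_(size A), B`_j *m P = A`_i.
  by have [tau hs] := fin_all_exists H; exists tau.
move=> j.
have: B`_j *m P \in A.
  by rewrite hAB; apply: (map_f (fun b => b *m P)); rewrite mem_nth.
move=> hb; have hi : (index (B`_j *m P) A < size A)%N by rewrite index_mem.
by exists (Ordinal hi); rewrite /= nth_index.
Qed.

Lemma flat_mem k (C : seq 'rV[R]_k) (T : {set 'I_(size C)}) (u : 'rV[R]_k) :
  (u <= flat T)%MS = [forall j in T, (u *m (C`_j)^T) 0 0 == 0].
Proof.
rewrite /flat genmxE sub_kermx.
set M := \matrix_(i, j) _.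
have E j : (u *m M) 0 j = if j \in T then (u *m (C`_j)^T) 0 0 else 0.
  rewrite !mxE; case: ifP => jT.
    by apply: eq_bigr => a _; rewrite !mxE jT.
  by apply: big1 => a _; rewrite mxE jT mulr0.
apply/eqP/forallP => [H j|H].
  apply/implyP => jT; have := E j; rewrite jT => h; apply/eqP; rewrite -h H mxE.
  by [].
apply: (iffLR (matrixP _ _)) => a j; rewrite ord1 E [RHS]mxE.
case: ifP => jT //; have := H j; rewrite jT /=; by move/eqP.
Qed.

Lemma gen_eq k (X Y : 'M[R]_k) :
  (forall u : 'rV_k, (u <= X)%MS = (u <= Y)%MS) -> (<<X>> = <<Y>>)%MS.
Proof.
move=> H; apply/genmxP/andP; split; apply/row_subP => i.
  by rewrite -H row_sub.
by rewrite H row_sub.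
Qed.

Lemma gen_eq2 k (X Y : 'M[R]_k) : (<<X>>)%MS = X -> (<<Y>>)%MS = Y ->
  (forall u : 'rV_k, (u <= X)%MS = (u <= Y)%MS) -> X = Y.
Proof. by move=> hX hY H; rewrite -hX -hY; apply: gen_eq. Qed.

Lemma flat_gen k (C : seq 'rV[R]_k) (T : {set 'I_(size C)}) : (<< flat T >>)%MS = flat T.
Proof. by rewrite /flat genmx_id. Qed.

Lemma pre_gen y : (<< pre y >>)%MS = pre y.
Proof. by rewrite /pre genmx_id. Qed.

Section ST.
Variables (sigma : 'I_(size A) -> 'I_(size B)) (tau : 'I_(size B) -> 'I_(size A)).
Hypothesis hs : forall i : 'I_(size A), A`_i = B`_(sigma i) *m P.
Hypothesis ht : forall j : 'I_(size B), B`_j *m P = A`_(tau j).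

Lemma keyA k (x : 'M_(k, m)) (i : 'I_(size A)) : x *m (A`_i)^T = (x *m P^T) *m (B`_(sigma i))^T.
Proof. by rewrite hs trmx_mul mulmxA. Qed.

Lemma keyB k (x : 'M_(k, m)) (j : 'I_(size B)) : (x *m P^T) *m (B`_j)^T = x *m (A`_(tau j))^T.
Proof. by rewrite -ht trmx_mul mulmxA. Qed.

Lemma flatA (T : {set 'I_(size A)}) : flat T = pre (flat [set sigma i | i in T]).
Proof.
apply: gen_eq2; rewrite ?flat_gen ?pre_gen // => u.
rewrite flat_mem sub_pre flat_mem.
apply/forallP/forallP => H j.
  apply/implyP => /imsetP [i iT ->].
  by have := H i; rewrite iT /= keyA.
apply/implyP => jT; rewrite keyA.
by have := H (sigma j); rewrite imset_f.
Qed.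

Lemma flatB (T : {set 'I_(size B)}) : pre (flat T) = flat [set tau j | j in T].
Proof.
apply: gen_eq2; rewrite ?flat_gen ?pre_gen // => u.
rewrite flat_mem sub_pre flat_mem.
apply/forallP/forallP => H j.
  apply/implyP => /imsetP [i iT ->].
  by have := H i; rewrite iT /= keyB.
apply/implyP => jT; rewrite keyB.
by have := H (tau j); rewrite imset_f.
Qed.

Lemma memL x : (x \in intersection_poset A) = (x \in map pre (intersection_poset B)).
Proof.
rewrite /intersection_poset mem_undup; apply/mapP/mapP => [[T _ ->]|[y]].
  exists (flat [set sigma i | i in T]); last exact: flatA.
  by rewrite mem_undup; apply: map_f; rewrite mem_enum in_setT.
rewrite mem_undup => /mapP [T _ ->] ->.
by exists [set tau j | j in T]; rewrite ?mem_enum ?in_setT ?flatB.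
Qed.

Lemma LB_gen y : y \in intersection_poset B -> (<<y>>)%MS = y.
Proof. by rewrite mem_undup => /mapP [T _ ->]; rewrite flat_gen. Qed.

Lemma permL : perm_eq (intersection_poset A) (map pre (intersection_poset B)).
Proof.
apply: uniq_perm; first exact: undup_uniq.
  rewrite map_inj_in_uniq ?undup_uniq // => y1 y2 h1 h2 e.
  rewrite -(LB_gen h1) -(LB_gen h2); apply/genmxP.
  by rewrite -!pre_le e !submx_refl.
exact: memL.
Qed.

Lemma mob_pre f y :
  mobius_rec (intersection_poset A) f (pre y) = mobius_rec (intersection_poset B) f y.
Proof.
elim: f y => [//|f IH] y /=; rewrite pre_full; case: ifP => // _.
congr (- _); rewrite (perm_big _ permL) big_map.
by apply: eq_big => z; rewrite ?pre_lt ?IH.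
Qed.

Lemma char_transfer :
  char_poly_arr A = 'X^(m - n) * char_poly_arr B.
Proof.
rewrite /char_poly_arr (perm_big _ permL) big_map mulr_sumr.
apply: eq_bigr => y _; rewrite /mobius mob_pre rank_pre.
have hmn : (n <= m)%N.
  rewrite -{1}(mxrank1 R n) -QtPt.
  exact: leq_trans (mxrankM_maxr _ _) (rank_leq_row _).
have -> : m.+1 = (n.+1 + (m - n))%N by lia.
rewrite mob_fuel_add; last by lia.
by rewrite exprD mulrA mulrC.
Qed.

Lemma chamber_transfer : nchambers A = nchambers B.
Proof.
rewrite /nchambers.
pose g (s : {ffun 'I_(size B) -> bool}) : {ffun 'I_(size A) -> bool} :=
  [ffun i => s (sigma i)].
have Binj j : B`_(sigma (tau j)) = B`_j.
  have: B`_(sigma (tau j)) *m P = B`_j *m P by rewrite -hs ht.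
  by move/(congr1 (mulmx^~ Q)); rewrite -!mulmxA PQ !mulmx1.
have signB (s : {ffun 'I_(size B) -> bool}) (y : 'rV_n) :
    (forall j : 'I_(size B), ((y *m (B`_j)^T) 0 0 != 0) /\ ((0 < (y *m (B`_j)^T) 0 0) = s j)) ->
    forall j, s (sigma (tau j)) = s j.
  by move=> H j; rewrite -(H j).2 -(H _).2 Binj.
have E : [set s | Defs.decP (chamber_sign s)] =
    g @: [set s | Defs.decP (chamber_sign s)].
  apply/setP => sA; rewrite inE; apply/idP/imsetP.
    move/decPP => [x H]; exists [ffun j => sA (tau j)].
      rewrite inE; apply/decPP; exists (x *m P^T) => j; rewrite keyB ffunE; exact: H.
    apply/ffunP => i; rewrite !ffunE.
    have e : A`_(tau (sigma i)) = A`_i by rewrite -ht hs.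
    by rewrite -(H i).2 -(H _).2 e.
  move=> [s]; rewrite inE => /decPP [y H] ->; apply/decPP.
  exists (y *m Q^T) => i; rewrite keyA -[y *m Q^T *m P^T]mulmxA QtPt mulmx1 ffunE; exact: H.
rewrite E card_in_imset // => s1 s2; rewrite !inE => /decPP [y1 H1] /decPP [y2 H2] e.
apply/ffunP => j; rewrite -(signB _ _ H1) -(signB _ _ H2).
by have := congr1 (fun f : {ffun 'I_(size A) -> bool} => f (tau j)) e; rewrite !ffunE.
Qed.

End ST.

Lemma transfer : char_poly_arr A = 'X^(m - n) * char_poly_arr B /\ nchambers A = nchambers B.
Proof.
have [sigma hs] := ex_sigma; have [tau ht] := ex_tau.
by split; [exact: char_transfer hs ht | exact: chamber_transfer hs ht].
Qed.

End Transfer.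

Section I. Variable V : zmodType.
Implicit Types a b c d e f : V.
Lemma idXYZ a b c d e : (a - b) + (c - d) + (e + b + d) = a + c + e.
Proof. by rewrite addrACA subrK addrACA addNr addr0 -addrA [e + c]addrC addrA. Qed.
Lemma idXZ a b d e : (a - b) + (e + b + d) = a + d + e.
Proof. by rewrite addrA addrACA addNr addr0 -addrA [e + d]addrC addrA. Qed.
Lemma idYZ b c d e : (c - d) + (e + b + d) = b + c + e.
Proof. by rewrite addrACA addNr addr0 [e + b]addrC addrCA addrA. Qed.
Lemma idZ b d e : e + b + d = b + d + e.
Proof. by rewrite -addrA addrC. Qed.
Lemma iddX a a' b : (a - b) - (a' - b) = a - a'.
Proof. by rewrite opprB addrA subrK. Qed.
Lemma iddZ b d e e' : (e + b + d) - (e' + b + d) = e - e'.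
Proof. by rewrite -[e + b + d]addrA -[e' + b + d]addrA opprD addrACA subrr addr0. Qed.
End I.

Lemma mem_diffs (K : pzRingType) a b c n0 (e : 'I_n0 -> 'rV[K]_(a+b+c)) v :
  reflect (exists i1 : 'I_n0, exists i2 : 'I_n0, (i1 < i2)%N /\ v = e i1 - e i2) (v \in diffs e).
Proof.
apply: (iffP mapP) => [[[i1 i2]]|[i1 [i2 [lt ->]]]].
  by rewrite mem_filter /= => /andP [lt _] ->; exists i1, i2.
exists (i1, i2) => //; rewrite mem_filter /= lt /=.
by apply/allpairsP; exists (i1, i2); rewrite !mem_enum.
Qed.

Section Conc.
Variables (R : realFieldType) (p q r : nat).

Local Notation EX := (@ex R p.+1 q.+1 r).
Local Notation EY := (@ey R p.+1 q.+1 r).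
Local Notation EZ := (@ez R p.+1 q.+1 r).
Local Notation X := (@ex R p q r).
Local Notation Y := (@ey R p q r).
Local Notation Z := (@ez R p q r).

Definition Pm : 'M[R]_(p + q + r, p.+1 + q.+1 + r) :=
  col_mx (col_mx (\matrix_(i < p) (EX (lift ord_max i) - EX ord_max))
                 (\matrix_(j < q) (EY (lift ord_max j) - EY ord_max)))
         (\matrix_(k < r) (EZ k + EX ord_max + EY ord_max)).

Definition oX (o : option 'I_p) : 'rV[R]_(p + q + r) := if o is Some i then X i else 0.
Definition oY (o : option 'I_q) : 'rV[R]_(p + q + r) := if o is Some i then Y i else 0.

Definition Qm : 'M[R]_(p.+1 + q.+1 + r, p + q + r) :=
  col_mx (col_mx (\matrix_(i < p.+1) oX (unlift ord_max i))
                 (\matrix_(j < q.+1) oY (unlift ord_max j)))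
         (\matrix_(k < r) Z k).

Lemma XP i : X i *m Pm = EX (lift ord_max i) - EX ord_max.
Proof. by rewrite /ex -rowE /Pm rowKu rowKu rowK. Qed.
Lemma YP j : Y j *m Pm = EY (lift ord_max j) - EY ord_max.
Proof. by rewrite /ey -rowE /Pm rowKu rowKd rowK. Qed.
Lemma ZP k : Z k *m Pm = EZ k + EX ord_max + EY ord_max.
Proof. by rewrite /ez -rowE /Pm rowKd rowK. Qed.

Lemma EXQ i : EX i *m Qm = oX (unlift ord_max i).
Proof. by rewrite /ex -rowE /Qm rowKu rowKu rowK. Qed.
Lemma EYQ j : EY j *m Qm = oY (unlift ord_max j).
Proof. by rewrite /ey -rowE /Qm rowKu rowKd rowK. Qed.
Lemma EZQ k : EZ k *m Qm = Z k.
Proof. by rewrite /ez -rowE /Qm rowKd rowK. Qed.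

Lemma PQm : Pm *m Qm = 1%:M.
Proof.
apply/row_matrixP => s; rewrite row_mul row1 rowE.
case: (split_ordP s) => [s1 ->|k ->].
  case: (split_ordP s1) => [i ->|j ->].
    by rewrite -/(X i) XP mulmxBl !EXQ liftK unlift_none subr0.
  by rewrite -/(Y j) YP mulmxBl !EYQ liftK unlift_none subr0.
by rewrite -/(Z k) ZP !mulmxDl EZQ EXQ EYQ !unlift_none !addr0.
Qed.


Lemma memA_trip i j k : EX i + EY j + EZ k \in arrA R p.+1 q.+1 r.
Proof.
rewrite /arrA mem_cat; apply/orP; left; apply/flattenP.
exists [seq EX i + EY j0 + EZ k0 | j0 <- enum 'I_q.+1, k0 <- enum 'I_r].
  by apply/mapP; exists i; rewrite ?mem_enum.
by apply/allpairsP; exists (j, k); rewrite !mem_enum.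
Qed.

Lemma memA_dX (i1 i2 : 'I_p.+1) : (i1 < i2)%N -> EX i1 - EX i2 \in arrA R p.+1 q.+1 r.
Proof.
move=> lt; rewrite /arrA !mem_cat; apply/orP; right; apply/orP; left.
by apply/mem_diffs; exists i1, i2.
Qed.

Lemma memA_dY (i1 i2 : 'I_q.+1) : (i1 < i2)%N -> EY i1 - EY i2 \in arrA R p.+1 q.+1 r.
Proof.
move=> lt; rewrite /arrA !mem_cat; apply/orP; right; apply/orP; right; apply/orP; left.
by apply/mem_diffs; exists i1, i2.
Qed.

Lemma memA_dZ (i1 i2 : 'I_r) : (i1 < i2)%N -> EZ i1 - EZ i2 \in arrA R p.+1 q.+1 r.
Proof.
move=> lt; rewrite /arrA !mem_cat; apply/orP; right; apply/orP; right; apply/orP; right.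
by apply/mem_diffs; exists i1, i2.
Qed.

Lemma lift_lt (n0 : nat) (i : 'I_n0) : (lift ord_max i < (ord_max : 'I_n0.+1))%N.
Proof. by rewrite lift_max. Qed.

Lemma memHA h : h \in arrH R p.+1 q.+1 r -> h *m Pm \in arrA R p.+1 q.+1 r.
Proof.
move=> H; rewrite /arrH !mem_cat in H; move: H.
case/orP => [/mapP [i _ ->]|]; first by rewrite XP memA_dX ?lift_lt.
case/orP => [/mapP [j _ ->]|]; first by rewrite YP memA_dY ?lift_lt.
case/orP => [/mapP [k _ ->]|]; first by rewrite ZP idZ memA_trip.
case/orP => [/allpairsP [[i k] [_ _ ->]]|] /=.
  by rewrite mulmxDl XP ZP idXZ memA_trip.
case/orP => [/allpairsP [[j k] [_ _ ->]]|] /=.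
  by rewrite mulmxDl YP ZP idYZ memA_trip.
case/orP => [/flattenP [s /mapP [i _ ->] /allpairsP [[j k] [_ _ ->]]]|] /=.
  by rewrite !mulmxDl XP YP ZP idXYZ memA_trip.
case/orP => [/mem_diffs [i1 [i2 [lt ->]]]|].
  by rewrite mulmxBl !XP iddX memA_dX // !lift_max.
case/orP => [/mem_diffs [i1 [i2 [lt ->]]]|].
  by rewrite mulmxBl !YP iddX memA_dY // !lift_max.
move=> /mem_diffs [i1 [i2 [lt ->]]].
by rewrite mulmxBl !ZP iddZ memA_dZ.
Qed.


Ltac goR := apply/orP; right.
Ltac goL := apply/orP; left.

Lemma memH_X i : X i \in arrH R p.+1 q.+1 r.
Proof. by rewrite /arrH !mem_cat; goL; apply/mapP; exists i; rewrite ?mem_enum. Qed.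
Lemma memH_Y j : Y j \in arrH R p.+1 q.+1 r.
Proof. by rewrite /arrH !mem_cat; goR; goL; apply/mapP; exists j; rewrite ?mem_enum. Qed.
Lemma memH_Z k : Z k \in arrH R p.+1 q.+1 r.
Proof. by rewrite /arrH !mem_cat; do 2 goR; goL; apply/mapP; exists k; rewrite ?mem_enum. Qed.
Lemma memH_XZ i k : X i + Z k \in arrH R p.+1 q.+1 r.
Proof.
by rewrite /arrH !mem_cat; do 3 goR; goL; apply/allpairsP; exists (i, k); rewrite ?mem_enum.
Qed.
Lemma memH_YZ j k : Y j + Z k \in arrH R p.+1 q.+1 r.
Proof.
by rewrite /arrH !mem_cat; do 4 goR; goL; apply/allpairsP; exists (j, k); rewrite ?mem_enum.
Qed.
Lemma memH_XYZ i j k : X i + Y j + Z k \in arrH R p.+1 q.+1 r.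
Proof.
rewrite /arrH !mem_cat; do 5 goR; goL; apply/flattenP.
exists [seq X i + Y j0 + Z k0 | j0 <- enum 'I_q, k0 <- enum 'I_r].
  by apply/mapP; exists i; rewrite ?mem_enum.
by apply/allpairsP; exists (j, k); rewrite !mem_enum.
Qed.
Lemma memH_dX (i1 i2 : 'I_p) : (i1 < i2)%N -> X i1 - X i2 \in arrH R p.+1 q.+1 r.
Proof.
by move=> lt; rewrite /arrH !mem_cat; do 6 goR; goL; apply/mem_diffs; exists i1, i2.
Qed.
Lemma memH_dY (i1 i2 : 'I_q) : (i1 < i2)%N -> Y i1 - Y i2 \in arrH R p.+1 q.+1 r.
Proof.
by move=> lt; rewrite /arrH !mem_cat; do 7 goR; goL; apply/mem_diffs; exists i1, i2.
Qed.
Lemma memH_dZ (i1 i2 : 'I_r) : (i1 < i2)%N -> Z i1 - Z i2 \in arrH R p.+1 q.+1 r.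
Proof.
by move=> lt; rewrite /arrH !mem_cat; do 8 goR; apply/mem_diffs; exists i1, i2.
Qed.

Lemma memAH v : v \in arrA R p.+1 q.+1 r ->
  v \in [seq h *m Pm | h <- arrH R p.+1 q.+1 r].
Proof.
move=> H; rewrite /arrA !mem_cat in H; move: H.
case/orP => [/flattenP [s /mapP [i _ ->] /allpairsP [[j k] [_ _ ->]]]|] /=.
  case: (unliftP ord_max i) => [i' ->|->]; case: (unliftP ord_max j) => [j' ->|->].
  - have -> : EX (lift ord_max i') + EY (lift ord_max j') + EZ k = (X i' + Y j' + Z k) *m Pm.
      by rewrite !mulmxDl XP YP ZP idXYZ.
    by apply: map_f; exact: memH_XYZ.
  - have -> : EX (lift ord_max i') + EY ord_max + EZ k = (X i' + Z k) *m Pm.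
      by rewrite !mulmxDl XP ZP idXZ.
    by apply: map_f; exact: memH_XZ.
  - have -> : EX ord_max + EY (lift ord_max j') + EZ k = (Y j' + Z k) *m Pm.
      by rewrite !mulmxDl YP ZP idYZ.
    by apply: map_f; exact: memH_YZ.
  - have -> : EX ord_max + EY ord_max + EZ k = Z k *m Pm by rewrite ZP [RHS]idZ.
    by apply: map_f; exact: memH_Z.
case/orP => [/mem_diffs [i1 [i2 [lt ->]]]|].
  case: (unliftP ord_max i1) => [i1' e1|e1]; last first.
    by move: lt; rewrite e1 /=; have := ltn_ord i2; lia.
  case: (unliftP ord_max i2) => [i2' e2|e2]; rewrite e1 ?e2.
    have -> : EX (lift ord_max i1') - EX (lift ord_max i2') = (X i1' - X i2') *m Pm.
      by rewrite mulmxBl !XP iddX.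
    by apply: map_f; apply: memH_dX; move: lt; rewrite e1 e2 !lift_max.
  by rewrite -XP; apply: map_f; exact: memH_X.
case/orP => [/mem_diffs [i1 [i2 [lt ->]]]|].
  case: (unliftP ord_max i1) => [i1' e1|e1]; last first.
    by move: lt; rewrite e1 /=; have := ltn_ord i2; lia.
  case: (unliftP ord_max i2) => [i2' e2|e2]; rewrite e1 ?e2.
    have -> : EY (lift ord_max i1') - EY (lift ord_max i2') = (Y i1' - Y i2') *m Pm.
      by rewrite mulmxBl !YP iddX.
    by apply: map_f; apply: memH_dY; move: lt; rewrite e1 e2 !lift_max.
  by rewrite -YP; apply: map_f; exact: memH_Y.
move=> /mem_diffs [i1 [i2 [lt ->]]].
have -> : EZ i1 - EZ i2 = (Z i1 - Z i2) *m Pm by rewrite mulmxBl !ZP iddZ.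
by apply: map_f; exact: memH_dZ.
Qed.

End Conc.

Theorem lemma5p7 (R : realFieldType) (l1 l2 l3 : nat) :
  (0 < l1)%N -> (0 < l2)%N -> (0 < l3)%N ->
  char_poly_arr (arrA R l1 l2 l3) = 'X^2 * char_poly_arr (arrH R l1 l2 l3) /\
  nchambers (arrA R l1 l2 l3) = nchambers (arrH R l1 l2 l3).
Proof.
case: l1 => [//|p] _; case: l2 => [//|q] _ _.
have hAB : forall v, (v \in arrA R p.+1 q.+1 l3) =
    (v \in [seq h *m Pm R p q l3 | h <- arrH R p.+1 q.+1 l3]).
  move=> v; apply/idP/idP; first exact: memAH.
  by move=> /mapP [h hH ->]; exact: memHA.
have [c e] := transfer (PQm R p q l3) hAB.
split; last exact: e.
rewrite c.
by congr (_ * _); congr (GRing.exp _ _); lia.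
Qed.
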